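(* Let $V$ be a vector space of odd dimension $n$ over a field $\mathbb{F}$ with an alternating bilinear form $\mathsf{s}$ of maximal rank, $p$ a $1$-dimensional subspace with $p\cap\mathrm{Rad}(V)=0$, and $H$ a complement of $p$ in $V$ containing $\mathrm{Rad}(V)$. Then every triangle of $\Pi(p,H)$ is null-homotopic.
   Context: $\mathrm{Rad}(U)=U\cap U^\perp$; maximal rank means $\dim\mathrm{Rad}(V)\le1$. $\Pi(p,H)$: its objects are the subspaces $U\le H$ with $1\le\dim U\le n-2$ such that $\mathrm{Rad}(V)\not\subseteq U$, $\dim\mathrm{Rad}(U)\le 2$, and either $\mathrm{Rad}(U)=0$ or $\mathrm{Rad}(U)\not\subseteq p^\perp$; the type of $U$ is $\dim U$; points are objects of type 1, lines are objects of type 2. For objects $U\ne W$ with $\dim U<\dim W$, they are incident iff either $\dim W$ is odd and $U\subseteq W$, or $\dim W$ is even, $U\subseteq W$ and $U\cap\mathrm{Rad}(W\cap p^\perp)=0$. A path is a sequence of objects, consecutive ones incident and distinct; a triangle is a closed path $p_1,L_1,p_2,L_2,p_3,L_3,p_1$ with $p_i$ points and $L_i$ lines. A closed path is null-homotopic if it can be reduced to the trivial path by repeatedly inserting or removing closed paths of length $2$ or $3$. *)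

(* Defs.v *)
From HB Require Import structures.
From mathcomp Require Import all_boot all_order all_algebra.
From mathcomp Require Import sesquilinear.
From Stdlib Require Import Relations.

Set Implicit Arguments.
Unset Strict Implicit.
Unset Printing Implicit Defensive.

Import Order.TTheory GRing.Theory Num.Theory.
Local Open Scope ring_scope.

Section Pi.
Variables (F : fieldType) (vT : vectType F) (s : {skew_symmetric vT}).

Definition perp (U : {vspace vT}) : {vspace vT} := orthov s U.

Definition Rad (U : {vspace vT}) : {vspace vT} := (U :&: perp U)%VS.

Definition is_obj (p H U : {vspace vT}) : bool :=
  [&& (U <= H)%VS,
      (1 <= \dim U)%N, (\dim U <= (\dim {:vT}) - 2)%N,
      ~~ (Rad fullv <= U)%VS,
      (\dim (Rad U) <= 2)%N &
      (Rad U == 0%VS) || ~~ (Rad U <= perp p)%VS].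

(* incidence for dim U < dim W (W the bigger object) *)
Definition inc_lt (p U W : {vspace vT}) : bool :=
  if odd (\dim W) then (U <= W)%VS
  else (U <= W)%VS && ((U :&: Rad (W :&: perp p)) == 0)%VS.

Definition incident (p U W : {vspace vT}) : bool :=
  (U != W) &&
  ((\dim U < \dim W)%N && inc_lt p U W || (\dim W < \dim U)%N && inc_lt p W U).

Definition adj (p H : {vspace vT}) : rel {vspace vT} :=
  fun U W => [&& is_obj p H U, is_obj p H W & incident p U W].

(* A path is x :: c with path (adj p H) x c; it is closed when last x c = x. *)

Definition insert_step (p H : {vspace vT}) (P Q : seq {vspace vT}) : Prop :=
  exists (a b d : seq {vspace vT}) (x : {vspace vT}),
    [/\ P = a ++ x :: b, Q = a ++ x :: d ++ b,
        (size d == 2)%N || (size d == 3)%N,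
        path (adj p H) x d & last x d = x].

Definition homotopy_step (p H : {vspace vT}) (P Q : seq {vspace vT}) : Prop :=
  insert_step p H P Q \/ insert_step p H Q P.

Definition null_homotopic (p H : {vspace vT}) (x : {vspace vT})
    (c : seq {vspace vT}) : Prop :=
  clos_refl_trans _ (homotopy_step p H) (x :: c) [:: x].

Definition is_triangle (p H : {vspace vT}) (x : {vspace vT})
    (c : seq {vspace vT}) : Prop :=
  exists p1 p2 p3 L1 L2 L3 : {vspace vT},
    [/\ x = p1, c = [:: L1; p2; L2; p3; L3; p1],
        path (adj p H) x c,
        [/\ \dim p1 = 1%N, \dim p2 = 1%N & \dim p3 = 1%N] &
        [/\ \dim L1 = 2%N, \dim L2 = 2%N & \dim L3 = 2%N]].

End Pi.

(* Main.v *)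
Require Import Defs.
From HB Require Import structures.
From mathcomp Require Import all_boot all_order all_algebra.
From mathcomp Require Import sesquilinear.
From mathcomp Require Import ring.
From Stdlib Require Import Relations.
Set Implicit Arguments.
Unset Strict Implicit.
Unset Printing Implicit Defensive.
Import Order.TTheory GRing.Theory Num.Theory.
Local Open Scope ring_scope.

Ltac fld := field; do ?[apply/andP; split]; assumption.

Section Basic.
Variables (F : fieldType) (vT : vectType F) (s : {skew_symmetric vT}).
Hypothesis salt : forall v : vT, s v v = 0.

Lemma skew u v : s u v = - s v u.
Proof. by rewrite hermC /= expr1 mulN1r. Qed.

Lemma skew0 u v : (s u v == 0) = (s v u == 0).
Proof. by rewrite skew oppr_eq0. Qed.

Lemma orthovS (A B : {vspace vT}) : (A <= B)%VS -> (orthov s B <= orthov s A)%VS.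
Proof.
move=> AB; apply/subvP => x /mem_orthovP xB; apply/mem_orthovP => y yA.
by apply: xB; apply: (subvP AB).
Qed.

Lemma mem_orthovD (A B : {vspace vT}) x :
  (x \in orthov s (A + B)) = (x \in orthov s A) && (x \in orthov s B).
Proof.
apply/mem_orthovP/andP => [h|[/mem_orthovP hA /mem_orthovP hB]].
  by split; apply/mem_orthovP => y yA; apply: h; [apply: (subvP (addvSl A B)) | apply: (subvP (addvSr A B))].
move=> y /memv_addP [a aA [b bB ->]].
by rewrite linearDr /= hA // hB // addr0.
Qed.

Lemma mem_orthov_line x y : (x \in orthov s <[y]>) = (s x y == 0).
Proof. exact: mem_orthov1. Qed.

Lemma memRad (U : {vspace vT}) x : (x \in Rad s U) = (x \in U) && (x \in orthov s U).
Proof. by rewrite /Rad /perp memv_cap. Qed.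

Lemma Rad_sub U : (Rad s U <= U)%VS.
Proof. exact: capvSl. Qed.

Lemma dim_gt0_mem (U : {vspace vT}) x : x \in U -> x != 0 -> (0 < \dim U)%N.
Proof.
move=> xU x0; have := dimvS (_ : (<[x]> <= U)%VS); rewrite dim_vline x0.
by apply; rewrite -memvE.
Qed.

Lemma DL (W : {vspace vT}) x z : x \in W -> z \in W -> s x z != 0 ->
  (\dim (W :&: orthov s <[x]> :&: orthov s <[z]>)).+2 = \dim W.
Proof.
move=> xW zW xz.
have x0 : x != 0 by apply: contraNneq xz => ->; rewrite linear0l.
have h1 : x \notin orthov s W by apply/mem_orthovPn; exists z.
have e1 := eq_dim_orthov1 h1.
have xW1 : x \in (W :&: orthov s <[x]>)%VS.
  rewrite memv_cap xW /=.
  rewrite mem_orthov_line.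
  by rewrite salt.
have h2 : z \notin orthov s (W :&: orthov s <[x]>)%VS.
  by apply/mem_orthovPn; exists x => //; rewrite skew0.
have e2 := eq_dim_orthov1 h2.
have g1 := dim_gt0_mem xW x0.
have g2 := dim_gt0_mem xW1 x0.
rewrite -e2 -e1 prednK //; last by rewrite e1.
by rewrite prednK.
Qed.

Lemma dim_add_line (U : {vspace vT}) v : v \notin U -> \dim (U + <[v]>) = (\dim U).+1.
Proof.
move=> vU; rewrite dimv_disjoint_sum ?dim_vline; last first.
  apply/eqP; rewrite -subv0; apply/subvP => y /memv_capP [yU /vlineP [k yk]].
  rewrite memv0 yk; case: (eqVneq k 0) => [->|k0]; first by rewrite scale0r.
  have := memvZ k^-1 yU; rewrite yk scalerA mulVf // scale1r => vU'.
  by rewrite vU' in vU.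
have -> : v != 0 by apply: contraNneq vU => ->; rewrite mem0v.
by rewrite addn1.
Qed.

Lemma dim_add_le (U V : {vspace vT}) : (\dim (U + V) <= \dim U + \dim V)%N.
Proof. by rewrite -dimv_sum_cap leq_addr. Qed.


Lemma Rad_split (U : {vspace vT}) x z : x \in U -> z \in U -> s x z != 0 ->
  Rad s (U :&: orthov s <[x]> :&: orthov s <[z]>) = Rad s U.
Proof.
move=> xU zU xz; set U' := (U :&: _ :&: _)%VS.
have zx : s z x != 0 by rewrite skew0.
have U'U : (U' <= U)%VS by rewrite /U' -capvA capvSl.
have memU' y : (y \in U') = [&& y \in U, s y x == 0 & s y z == 0].
  by rewrite /U' !memv_cap !mem_orthov_line andbA.
apply/eqP; rewrite eqEsubv; apply/andP; split; apply/subvP => w; rewrite !memRad.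
  case/andP => wU' /mem_orthovP wo; move: (wU'); rewrite memU' => /and3P [wU /eqP wx /eqP wz].
  rewrite wU /=; apply/mem_orthovP => u uU.
  pose a := s u z / s x z; pose b := s u x / s z x.
  have u'U' : u - a *: x - b *: z \in U'.
    rewrite memU' !rpredB ?memvZ //=.
    rewrite !linearBl /= !linearZl_LR /= !salt /a /b.
    apply/andP; split; apply/eqP; fld.
  have := wo _ u'U'; rewrite !linearBr /= !linearZr_LR /= wx wz.
  by rewrite !mulr0 !subr0.
case/andP => wU wo; move/mem_orthovP: (wo) => wo'.
rewrite memU' wU /= !wo' //=.
by rewrite eqxx; apply: (subvP (orthovS U'U)).
Qed.

Lemma parity (U : {vspace vT}) : odd (\dim (Rad s U)) = odd (\dim U).
Proof.
move: {2}(\dim U) (leqnn (\dim U)) => k; elim: k U => [|k IH] U hU.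
  have U0 : U = 0%VS by apply/eqP; rewrite -dimv_eq0 -leqn0.
  suff -> : Rad s U = 0%VS by rewrite U0.
  by apply/eqP; rewrite -subv0 -U0 Rad_sub.
case: (boolP (U <= orthov s U)%VS) => [iso|/subvPn [x xU /mem_orthovPn [z zU xz]]].
  by rewrite /Rad /perp (capv_idPl iso).
have e := DL xU zU xz.
rewrite -(Rad_split xU zU xz) IH; first by rewrite -e /= negbK.
by move: hU; rewrite -e ltnS => /ltnW.
Qed.


Lemma memRadV x : (x \in Rad s fullv) = (x \in orthov s fullv).
Proof. by rewrite memRad memvf. Qed.

Lemma E_lemma (X : seq vT) t :
  t \in orthov s (orthov s <<X>>) -> t \in (<<X>> + Rad s fullv)%VS.
Proof.
elim: X t => [|x X0 IH] t.
  by rewrite span_nil orthov0 add0v memRadV.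
have incl : (<<X0>> + Rad s fullv <= <[x]> + <<X0>> + Rad s fullv)%VS.
  by rewrite addvS // addvSr.
rewrite span_cons => /mem_orthovP ht.
case: (boolP (x \in orthov s (orthov s <<X0>>))) => [/mem_orthovP hx|].
  apply: (subvP incl); apply: IH; apply/mem_orthovP => y hy; apply: ht.
  by rewrite mem_orthovD mem_orthov_line skew0 hx ?eqxx.
case/mem_orthovPn => y1 hy1 xy1.
pose c := s t y1 / s x y1.
have h : t - c *: x \in orthov s (orthov s <<X0>>).
  apply/mem_orthovP => y hy.
  pose y' := y - (s x y / s x y1) *: y1.
  have hy' : y' \in orthov s (<[x]> + <<X0>>).
    rewrite mem_orthovD (rpredB hy (memvZ _ hy1)) andbT.
    rewrite mem_orthov_line skew0 /y' linearBr /= linearZr_LR /=.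
    apply/eqP; fld.
  have := ht _ hy'; rewrite /y' linearBr /= linearZr_LR /= => /eqP.
  rewrite subr_eq0 => /eqP e.
  rewrite linearBl /= linearZl_LR /= e /c; fld.
rewrite -(subrK (c *: x) t) rpredD //; first by apply: (subvP incl); apply: IH.
apply: (subvP (addvSl _ _)).
by apply: (subvP (addvSl _ _)); rewrite memvZ // memv_line.
Qed.

End Basic.

Section Homo.
Variables (F : fieldType) (vT : vectType F) (s : {skew_symmetric vT}).
Variables (p H : {vspace vT}).

Local Notation adj := (adj s p H).
Local Notation hrel := (clos_refl_trans _ (homotopy_step s p H)).

Lemma adj_sym U W : adj U W = adj W U.
Proof.
rewrite /adj /incident eq_sym orbC.
by case: (is_obj s p H U); case: (is_obj s p H W).
Qed.

Lemma hrel_sym P Q : hrel P Q -> hrel Q P.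
Proof.
elim => [{}P {}Q [h|h]||] .
- by apply: rt_step; right.
- by apply: rt_step; left.
- by move=> *; apply: rt_refl.
- by move=> P1 P2 P3 _ h1 _ h2; apply: rt_trans h2 h1.
Qed.

Lemma step_ctx a b P Q : insert_step s p H P Q ->
  insert_step s p H (a ++ P ++ b) (a ++ Q ++ b).
Proof.
case=> a0 [b0 [d [x [-> -> hd hp hl]]]].
exists (a ++ a0), (b0 ++ b), d, x; split => //.
- by rewrite -!catA.
- by rewrite -!catA /= -catA.
Qed.

Lemma hrel_ctx a b P Q : hrel P Q -> hrel (a ++ P ++ b) (a ++ Q ++ b).
Proof.
elim => [{}P {}Q [h|h]||].
- by apply: rt_step; left; apply: step_ctx.
- by apply: rt_step; right; apply: step_ctx.
- by move=> *; apply: rt_refl.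
- by move=> P1 P2 P3 _ h1 _ h2; apply: rt_trans h2.
Qed.

Lemma hrel_cons x P Q : hrel P Q -> hrel (x :: P) (x :: Q).
Proof. by move/(hrel_ctx [:: x] [::]); rewrite /= !cats0. Qed.

Lemma back x y b : adj x y -> hrel (x :: y :: x :: b) (x :: b).
Proof.
move=> hxy; apply: rt_step; right.
exists [::], b, [:: y; x], x; split => //=.
by rewrite hxy adj_sym hxy.
Qed.

Lemma back_ins x y b : adj x y -> hrel (x :: b) (x :: y :: x :: b).
Proof. by move=> h; apply: hrel_sym; apply: back. Qed.

Lemma tri x y z b : adj x y -> adj y z -> adj z x ->
  hrel (x :: y :: z :: b) (x :: z :: b).
Proof.
move=> hxy hyz hzx; apply: hrel_sym.
apply: (@rt_trans _ _ _ (x :: y :: z :: x :: z :: b)).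
  apply: rt_step; left; exists [::], (z :: b), [:: y; z; x], x; split => //=.
  by rewrite hxy hyz hzx.
apply: (hrel_cons x); apply: (hrel_cons y); apply: back.
exact: hzx.
Qed.

Lemma cone_open W x c b : path adj x c -> all (adj ^~ W) (x :: c) ->
  hrel (x :: c ++ b) (x :: W :: last x c :: b).
Proof.
elim: c x => [|y c IH] x /=.
  by move=> _ /andP [hx _]; apply: back_ins.
case/andP => hxy hp /and3P [hx hy hc].
apply: (@rt_trans _ _ _ (x :: y :: W :: last y c :: b)).
  by apply: hrel_cons; apply: IH => //=; rewrite hy hc.
by apply: tri => //; rewrite adj_sym.
Qed.

Lemma cone_closed W a x c b : path adj x c -> last x c = x ->
  all (adj ^~ W) (x :: c) ->
  hrel (a ++ x :: c ++ b) (a ++ x :: b).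
Proof.
move=> hp hl ha.
have h := hrel_ctx a [::] (cone_open b hp ha); rewrite !cats0 in h.
apply: (rt_trans _ _ _ _ _ h); rewrite hl.
have hxW : adj x W by move: ha => /andP [].
by have := hrel_ctx a [::] (back b hxW); rewrite !cats0.
Qed.

Lemma loop_ins a x y z b : adj x y -> adj y z ->
  hrel (a ++ x :: b) (a ++ x :: y :: z :: y :: x :: b).
Proof.
move=> hxy hyz.
apply: (@rt_trans _ _ _ (a ++ x :: y :: x :: b)).
  by have := hrel_ctx a [::] (back_ins b hxy); rewrite !cats0.
have := hrel_ctx (a ++ [:: x]) [::] (back_ins (x :: b) hyz).
by rewrite !cats0 -!catA.
Qed.

Lemma hex_decomp P1 L1 P2 L2 P3 L3 Pv M1 M2 M3 W1 W2 W3 :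
  adj P1 L1 -> adj L1 P2 -> adj P2 L2 -> adj L2 P3 -> adj P3 L3 -> adj L3 P1 ->
  adj P1 M1 -> adj P2 M2 -> adj P3 M3 -> adj M1 Pv -> adj M2 Pv -> adj M3 Pv ->
  all (adj ^~ W1) [:: Pv; M1; P1; L1; P2; M2] ->
  all (adj ^~ W2) [:: Pv; M2; P2; L2; P3; M3] ->
  all (adj ^~ W3) [:: P1; M1; Pv; M3; P3; L3] ->
  hrel [:: P1; L1; P2; L2; P3; L3; P1] [:: P1].
Proof.
move=> a1 a2 a3 a4 a5 a6 b1 b2 b3 c1 c2 c3 w1 w2 w3.
have s1 := loop_ins [::] [:: L1; P2; L2; P3; L3; P1] b1 c1.
have s2 := loop_ins [:: P1; M1; Pv; M1; P1; L1] [:: L2; P3; L3; P1] b2 c2.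
have s3 := loop_ins [:: P1; M1; Pv; M1; P1; L1; P2; M2; Pv; M2; P2; L2] [:: L3; P1] b3 c3.
simpl in s1, s2, s3.
apply: (rt_trans _ _ _ _ _ s1); apply: (rt_trans _ _ _ _ _ s2).
apply: (rt_trans _ _ _ _ _ s3).
have p1 : path adj Pv [:: M1; P1; L1; P2; M2; Pv].
  by rewrite /= adj_sym c1 adj_sym b1 a1 a2 b2 c2.
have q1 : all (adj ^~ W1) (Pv :: [:: M1; P1; L1; P2; M2; Pv]).
  by move: w1 => /= /and5P [ha hb hc hd /andP [he /andP [hf _]]]; rewrite /= ha hb hc hd he hf.
have k1 := cone_closed [:: P1; M1] [:: M2; P2; L2; P3; M3; Pv; M3; P3; L3; P1] p1 erefl q1.
simpl in k1; apply: (rt_trans _ _ _ _ _ k1).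
have p2 : path adj Pv [:: M2; P2; L2; P3; M3; Pv].
  by rewrite /= adj_sym c2 adj_sym b2 a3 a4 b3 c3.
have q2 : all (adj ^~ W2) (Pv :: [:: M2; P2; L2; P3; M3; Pv]).
  by move: w2 => /= /and5P [ha hb hc hd /andP [he /andP [hf _]]]; rewrite /= ha hb hc hd he hf.
have k2 := cone_closed [:: P1; M1] [:: M3; P3; L3; P1] p2 erefl q2.
simpl in k2; apply: (rt_trans _ _ _ _ _ k2).
have p3 : path adj P1 [:: M1; Pv; M3; P3; L3; P1].
  by rewrite /= b1 c1 adj_sym c3 adj_sym b3 a5 a6.
have q3 : all (adj ^~ W3) (P1 :: [:: M1; Pv; M3; P3; L3; P1]).
  by move: w3 => /= /and5P [ha hb hc hd /andP [he /andP [hf _]]]; rewrite /= ha hb hc hd he hf.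
exact: (cone_closed [::] [::] p3 erefl q3).
Qed.

End Homo.

Section Geo.
Variables (F : fieldType) (vT : vectType F) (s : {skew_symmetric vT}).
Variables (p H : {vspace vT}).
Hypothesis salt : forall v : vT, s v v = 0.
Hypothesis nodd : odd (\dim {:vT}).
Hypothesis dimR : (\dim (Rad s fullv) <= 1)%N.
Hypothesis dimp : \dim p = 1%N.
Hypothesis pH : (p + H = fullv)%VS.
Hypothesis pHcap : (p :&: H = 0)%VS.
Hypothesis RsubH : (Rad s fullv <= H)%VS.

Local Notation R := (Rad s fullv).
Local Notation n := (\dim {:vT}).
Local Notation e := (vpick p).
Local Notation adj := (adj s p H).
Local Notation is_obj := (is_obj s p H).

Lemma e_neq0 : e != 0.
Proof. by rewrite vpick0 -dimv_eq0 dimp. Qed.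

Lemma p_line : p = <[e]>%VS.
Proof.
apply/eqP; rewrite eq_sym eqEdim -memvE memv_pick dim_vline e_neq0 dimp /=.
by [].
Qed.

Lemma mem_perp x : (x \in perp s p) = (s x e == 0).
Proof. by rewrite /perp {1}p_line mem_orthov_line. Qed.

Lemma dimR1 : \dim R = 1%N.
Proof.
have := parity salt (fullv : {vspace vT}); rewrite nodd.
by move: dimR; case: (\dim R) => [|[]].
Qed.

Lemma R_orth x y : x \in R -> s x y = 0.
Proof. by rewrite memRadV => /mem_orthovP; apply; rewrite memvf. Qed.

Lemma R_orth' x y : x \in R -> s y x = 0.
Proof. by move=> /(R_orth y) h; rewrite skew h oppr0. Qed.

Lemma R_sub_orth X : (R <= orthov s X)%VS.
Proof.
apply/subvP => x xR; apply/mem_orthovP => y _; exact: R_orth.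
Qed.

Lemma R_line x : x \in R -> x != 0 -> R = <[x]>%VS.
Proof.
move=> xR x0; apply/eqP; rewrite eq_sym eqEdim -memvE xR dim_vline x0 /=.
by rewrite dimR1.
Qed.

Lemma R_in x (U : {vspace vT}) : x \in R -> x != 0 -> x \in U -> (R <= U)%VS.
Proof. by move=> xR x0 xU; rewrite (R_line xR x0) -memvE. Qed.

Lemma dimH : n = (\dim H).+1.
Proof.
have := dimv_disjoint_sum pHcap; rewrite pH dimp => ->.
by [].
Qed.

Lemma RHker x : x \in H -> x \in orthov s H -> s x e = 0 -> x \in R.
Proof.
move=> xH /mem_orthovP xo xe; rewrite memRadV; apply/mem_orthovP => v _.
have : v \in (p + H)%VS by rewrite pH memvf.
case/memv_addP => a; rewrite {1}p_line => /vlineP [k ->] [h hH ->].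
by rewrite linearDr /= linearZr_LR /= xe xo // mulr0 addr0.
Qed.

Lemma h0_exists : exists h0, [/\ h0 \in H, h0 \in orthov s H & s h0 e != 0].
Proof.
case: (boolP (Rad s H <= perp s p)%VS) => [sub|/subvPn [h0]].
  have RadHR : Rad s H = R.
    apply/eqP; rewrite eqEsubv; apply/andP; split.
      apply/subvP => x; rewrite memRad => /andP [xH xo].
      by apply: RHker => //; apply/eqP; rewrite -mem_perp; apply: (subvP sub); rewrite memRad xH.
    by rewrite /Rad subv_cap RsubH R_sub_orth.
  have := parity salt H; rewrite RadHR.
  have := parity salt (fullv : {vspace vT}); rewrite nodd => ->.
  by move: nodd; rewrite dimH /= => /negPf ->.
rewrite memRad mem_perp => /andP [hH ho] he.
by exists h0.
Qed.

Lemma n_gt0 : (0 < n)%N.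
Proof. by rewrite dimH. Qed.

Lemma H_orth h0 : h0 \in H -> h0 \in orthov s H -> s h0 e != 0 ->
  H = orthov s <[h0]>.
Proof.
move=> hH ho he.
have sub : (H <= orthov s <[h0]>)%VS.
  apply/subvP => x xH; rewrite mem_orthov_line skew0.
  by move/mem_orthovP: ho => ->.
have notR : h0 \notin orthov s fullv.
  apply: contra he => /mem_orthovP h; apply/eqP; apply: h; exact: memvf.
case: (leqif_dim_orthov1_full s h0 n_gt0) => _; rewrite notR => /eqP de.
apply/eqP; rewrite eqEdim sub /= -de.
by rewrite dimH.
Qed.

Lemma rad_cond W x : x \in Rad s W -> s x e != 0 ->
  (Rad s W == 0%VS) || ~~ (Rad s W <= perp s p)%VS.
Proof.
move=> xW xe; apply/orP; right; apply/negP => /subvP /(_ _ xW).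
by rewrite mem_perp (negPf xe).
Qed.

Lemma ne0_of_e x : s x e != 0 -> x != 0.
Proof. by apply: contraNneq => ->; rewrite linear0l. Qed.

Lemma obj_point v : v \in H -> s v e != 0 -> (3 <= n)%N -> is_obj <[v]>%VS.
Proof.
move=> vH ve n3; have v0 := ne0_of_e ve.
have vv : v \in Rad s <[v]>.
  by rewrite memRad memv_line mem_orthov_line salt eqxx.
apply/and5P; split.
- by rewrite -memvE.
- by rewrite dim_vline v0.
- by rewrite dim_vline v0 leq_subRL // ltnW.
- apply/negP => /subvP h.
  have : vpick R \in <[v]>%VS by apply: h; exact: memv_pick.
  case/vlineP => k hk.
  have r0 : vpick R != 0 by rewrite vpick0 -dimv_eq0 dimR1.
  have k0 : k != 0 by apply: contraNneq r0 => k0; rewrite hk k0 scale0r.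
  have : s (vpick R) e = 0 by apply: R_orth; exact: memv_pick.
  by rewrite hk linearZl_LR /= => /eqP; rewrite mulf_eq0 (negPf k0) (negPf ve).
- apply/andP; split; last exact: rad_cond vv ve.
  by apply: leq_trans (dimvS (Rad_sub _ _)) _; rewrite dim_vline v0.
Qed.

Lemma R_notin (U : {vspace vT}) x : ~~ (R <= U)%VS -> x \in R -> x \in U -> x = 0.
Proof.
move=> RU xR xU; apply/eqP; apply: contraNT RU => x0; exact: R_in xR x0 xU.
Qed.

Lemma obj_odd (W W' : {vspace vT}) m x : (W <= H)%VS -> (\dim W <= m.*2.+1)%N ->
  (m.*2.+1 <= n - 2)%N -> (Rad s W <= W')%VS -> (\dim W' + m.*2)%N = \dim W ->
  x \in Rad s W -> s x e != 0 -> is_obj W /\ \dim W = m.*2.+1.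
Proof.
move=> WH dW dn RW' dW' xR xe; have x0 := ne0_of_e xe.
have g1 : (0 < \dim W')%N by apply: (dim_gt0_mem (subvP RW' _ xR) x0).
have dWe : \dim W = m.*2.+1.
  apply/eqP; rewrite eqn_leq dW /= -dW' -add1n leq_add2r; exact: g1.
have dW'1 : \dim W' = 1%N by move: dW'; rewrite dWe -add1n => /addIn.
have dRad : (\dim (Rad s W) <= 1)%N by rewrite -dW'1 dimvS.
split => //.
apply/and5P; split => //.
- by rewrite dWe.
- by rewrite dWe.
- apply/negP => RW.
  have RRad : (R <= Rad s W)%VS by rewrite /Rad subv_cap RW R_sub_orth.
  have : Rad s W = R.
    apply/eqP; rewrite eq_sym eqEdim RRad /= dimR1; exact: dRad.
  move=> E; move: xR; rewrite E => xR'.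
  by move: xe; rewrite R_orth ?eqxx.
- apply/andP; split; last exact: rad_cond xR xe.
  exact: leq_trans dRad _.
Qed.

Lemma obj_line u v : u \in H -> v \in H -> s u e != 0 ->
  \dim (<[u]> + <[v]>)%VS = 2%N -> ~~ (R <= <[u]> + <[v]>)%VS -> (4 <= n)%N ->
  is_obj (<[u]> + <[v]>)%VS.
Proof.
move=> uH vH ue dM RM n4.
have uM : u \in (<[u]> + <[v]>)%VS by apply: (subvP (addvSl _ _)); exact: memv_line.
have vM : v \in (<[u]> + <[v]>)%VS by apply: (subvP (addvSr _ _)); exact: memv_line.
apply/and5P; split => //.
- by rewrite subv_add -!memvE uH vH.
- by rewrite dM.
- by rewrite dM leq_subRL // (leq_trans _ n4).
- apply/andP; split; first by rewrite (leq_trans (dimvS (Rad_sub _ _))) // dM.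
  case: (eqVneq (s u v) 0) => [uv|uv].
    apply: (rad_cond _ ue); rewrite memRad uM mem_orthovD !mem_orthov_line salt uv.
    by rewrite eqxx.
  apply/orP; left; rewrite -dimv_eq0 -leqn0.
  have := DL salt uM vM uv; rewrite dM => /eqP; rewrite !eqSS => /eqP d0.
  rewrite -d0 dimvS //; apply/subvP => w; rewrite memRad => /andP [wM /mem_orthovP wo].
  by rewrite !memv_cap wM !mem_orthov_line /= !wo // eqxx.
Qed.

Lemma adj_obj U W : adj U W -> is_obj U /\ is_obj W.
Proof. by case/and3P. Qed.

Lemma adj_odd U W : is_obj U -> is_obj W -> (\dim U < \dim W)%N -> odd (\dim W) ->
  (U <= W)%VS -> adj U W.
Proof.
move=> oU oW d od UW; rewrite /adj /incident oU oW d /inc_lt od UW /= andbT.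
by apply/eqP => E; rewrite E ltnn in d.
Qed.

Lemma adj_pl u (L : {vspace vT}) : is_obj <[u]>%VS -> is_obj L -> \dim L = 2%N ->
  s u e != 0 -> u \in L -> adj <[u]>%VS L.
Proof.
move=> oU oL dL ue uL; have u0 := ne0_of_e ue.
have d : (\dim <[u]> < \dim L)%N by rewrite dim_vline u0 dL.
rewrite /adj /incident oU oL d /inc_lt dL /= -memvE uL /=.
apply/andP; split; first by apply/eqP => E; rewrite E ltnn in d.
apply/orP; left.
rewrite -subv0; apply/subvP => y /memv_capP [/vlineP [k ->] yR].
have : k *: u \in perp s p.
  apply: (subvP (capvSr L _)); exact: (subvP (Rad_sub _ _) _ yR).
rewrite mem_perp linearZl_LR /= mulf_eq0 (negPf ue) orbF => /eqP ->.
by rewrite scale0r mem0v.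
Qed.

Lemma adj_sub U W : adj U W -> (\dim U < \dim W)%N -> (U <= W)%VS.
Proof.
case/and3P => _ _ /andP [_ /orP [/andP [_ h]|/andP [h _]]] d.
  by move: h; rewrite /inc_lt; case: ifP => // _ /andP [].
by rewrite ltnNge ltnW in h.
Qed.

Local Notation hrel := (clos_refl_trans _ (homotopy_step s p H)).

Lemma cone_hex (P1 L1 P2 L2 P3 L3 W : {vspace vT}) :
  path adj P1 [:: L1; P2; L2; P3; L3; P1] ->
  \dim P1 = 1%N -> \dim P2 = 1%N -> \dim P3 = 1%N ->
  \dim L1 = 2%N -> \dim L2 = 2%N -> \dim L3 = 2%N ->
  is_obj W -> odd (\dim W) -> (3 <= \dim W)%N ->
  (L1 <= W)%VS -> (L2 <= W)%VS -> (L3 <= W)%VS ->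
  hrel [:: P1; L1; P2; L2; P3; L3; P1] [:: P1].
Proof.
move=> hp d1 d2 d3 e1 e2 e3 oW odW dW s1 s2 s3.
move: (hp) => /= /andP [a1 /andP [a2 /andP [a3 /andP [a4 /andP [a5 /andP [a6 _]]]]]].
have [o1 _] := adj_obj a1; have [o2 _] := adj_obj a3; have [o3 _] := adj_obj a5.
have [_ oL1] := adj_obj a1; have [_ oL2] := adj_obj a3; have [_ oL3] := adj_obj a5.
have t1 : (P1 <= L1)%VS by have := adj_sub a1; rewrite d1 e1; apply.
have t2 : (P2 <= L2)%VS by have := adj_sub a3; rewrite d2 e2; apply.
have t3 : (P3 <= L3)%VS by have := adj_sub a5; rewrite d3 e3; apply.
have lt1 : forall X : {vspace vT}, \dim X = 1%N -> (\dim X < \dim W)%N by move=> X ->; apply: leq_trans dW.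
have lt2 : forall X : {vspace vT}, \dim X = 2%N -> (\dim X < \dim W)%N by move=> X ->.
have := @cone_closed _ _ s p H W [::] P1 [:: L1; P2; L2; P3; L3; P1] [::] hp erefl.
move=> /= h; apply: h.
have aW X : is_obj X -> (\dim X < \dim W)%N -> (X <= W)%VS -> adj X W.
  by move=> oX dX XW; apply: adj_odd.
have hP1 := aW _ o1 (lt1 _ d1) (subv_trans t1 s1).
have hP2 := aW _ o2 (lt1 _ d2) (subv_trans t2 s2).
have hP3 := aW _ o3 (lt1 _ d3) (subv_trans t3 s3).
have hL1 := aW _ oL1 (lt2 _ e1) s1.
have hL2 := aW _ oL2 (lt2 _ e2) s2.
have hL3 := aW _ oL3 (lt2 _ e3) s3.
by rewrite hP1 hP2 hP3 hL1 hL2 hL3.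
Qed.

Lemma M_facts u (L : {vspace vT}) v : is_obj <[u]>%VS -> u \in L -> \dim L = 2%N ->
  s u e != 0 -> v \in H -> is_obj (L + <[v]>)%VS -> \dim (L + <[v]>)%VS = 3%N ->
  (5 <= n)%N ->
  [/\ is_obj (<[u]> + <[v]>)%VS, \dim (<[u]> + <[v]>)%VS = 2%N &
     (<[u]> + <[v]> <= L + <[v]>)%VS].
Proof.
move=> ou uL dL ue vH oW dW n5.
have u0 := ne0_of_e ue.
have vL : v \notin L.
  apply/negP => vL; move: dW; rewrite (addv_idPl _) ?dL // -memvE //.
have vu : v \notin <[u]>%VS.
  by apply: contra vL; apply: (subvP _); rewrite -memvE.
have sub : (<[u]> + <[v]> <= L + <[v]>)%VS by rewrite addvS // -memvE.
have dM : \dim (<[u]> + <[v]>)%VS = 2%N by rewrite dim_add_line // dim_vline u0.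
split => //.
apply: obj_line => //.
- by move: ou => /and5P [h _ _ _ _]; rewrite memvE.
- by apply/negP => RM; move: oW => /and5P [_ _ _ /negP []]; apply: subv_trans sub.
- exact: leq_trans n5.
Qed.

Lemma conept_hex (L1 L2 L3 : {vspace vT}) u1 u2 u3 v :
  path adj <[u1]>%VS [:: L1; <[u2]>%VS; L2; <[u3]>%VS; L3; <[u1]>%VS] ->
  \dim L1 = 2%N -> \dim L2 = 2%N -> \dim L3 = 2%N ->
  s u1 e != 0 -> s u2 e != 0 -> s u3 e != 0 ->
  u1 \in L1 -> u2 \in L1 -> u2 \in L2 -> u3 \in L2 -> u3 \in L3 -> u1 \in L3 ->
  v \in H -> s v e != 0 -> (5 <= n)%N ->
  is_obj (L1 + <[v]>)%VS -> \dim (L1 + <[v]>)%VS = 3%N ->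
  is_obj (L2 + <[v]>)%VS -> \dim (L2 + <[v]>)%VS = 3%N ->
  is_obj (L3 + <[v]>)%VS -> \dim (L3 + <[v]>)%VS = 3%N ->
  hrel [:: <[u1]>%VS; L1; <[u2]>%VS; L2; <[u3]>%VS; L3; <[u1]>%VS] [:: <[u1]>%VS].
Proof.
move=> hp e1 e2 e3 f1 f2 f3 i11 i21 i22 i32 i33 i13 vH ve n5 oW1 dW1 oW2 dW2 oW3 dW3.
move: (hp) => /= /andP [a1 /andP [a2 /andP [a3 /andP [a4 /andP [a5 /andP [a6 _]]]]]].
have [o1 oL1] := adj_obj a1; have [o2 oL2] := adj_obj a3; have [o3 oL3] := adj_obj a5.
have n3 : (3 <= n)%N by apply: leq_trans n5.
have oPv := obj_point vH ve n3.
have [oM1 dM1 sM1] := M_facts o1 i11 e1 f1 vH oW1 dW1 n5.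
have [oM2 dM2 sM2] := M_facts o2 i22 e2 f2 vH oW2 dW2 n5.
have [oM3 dM3 sM3] := M_facts o3 i33 e3 f3 vH oW3 dW3 n5.
have [_ _ sM2'] := M_facts o2 i21 e1 f2 vH oW1 dW1 n5.
have [_ _ sM3'] := M_facts o3 i32 e2 f3 vH oW2 dW2 n5.
have [_ _ sM1'] := M_facts o1 i13 e3 f1 vH oW3 dW3 n5.
have mu (u w : vT) : u \in (<[u]> + <[w]>)%VS by apply: (subvP (addvSl _ _)); exact: memv_line.
have mv (u w : vT) : w \in (<[u]> + <[w]>)%VS by apply: (subvP (addvSr _ _)); exact: memv_line.
have d1 (u : vT) : s u e != 0 -> \dim <[u]>%VS = 1%N by move=> h; rewrite dim_vline ne0_of_e.
have odd3 : forall X : {vspace vT}, \dim X = 3%N -> odd (\dim X) by move=> X ->.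
have LW (L : {vspace vT}) : (L <= L + <[v]>)%VS by exact: addvSl.
have vW (L : {vspace vT}) : (<[v]> <= L + <[v]>)%VS by exact: addvSr.
have inL (L : {vspace vT}) (u : vT) : u \in L -> (<[u]> <= L + <[v]>)%VS.
  by move=> uL; apply: subv_trans (LW L); rewrite -memvE.
apply: (@hex_decomp _ _ s p H _ L1 _ L2 _ L3 <[v]>%VS (<[u1]> + <[v]>)%VS
  (<[u2]> + <[v]>)%VS (<[u3]> + <[v]>)%VS (L1 + <[v]>)%VS (L2 + <[v]>)%VS (L3 + <[v]>)%VS) => //.
- exact: adj_pl o1 oM1 dM1 f1 (mu _ _).
- exact: adj_pl o2 oM2 dM2 f2 (mu _ _).
- exact: adj_pl o3 oM3 dM3 f3 (mu _ _).
- by rewrite adj_sym; exact: adj_pl oPv oM1 dM1 ve (mv _ _).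
- by rewrite adj_sym; exact: adj_pl oPv oM2 dM2 ve (mv _ _).
- by rewrite adj_sym; exact: adj_pl oPv oM3 dM3 ve (mv _ _).
- rewrite /= !adj_odd ?odd3 ?dW1 ?d1 ?dM1 ?dM2 ?e1 ?vW ?LW ?inL //.
- rewrite /= !adj_odd ?odd3 ?dW2 ?d1 ?dM2 ?dM3 ?e2 ?vW ?LW ?inL //.
- rewrite /= !adj_odd ?odd3 ?dW3 ?d1 ?dM1 ?dM3 ?e3 ?vW ?LW ?inL //.
Qed.

Lemma Rad_mem (W : {vspace vT}) x : x \in W -> x \in orthov s W -> x \in Rad s W.
Proof. by move=> h1 h2; rewrite memRad h1 h2. Qed.

Lemma Rad_le (W X : {vspace vT}) a b : (Rad s W <= X)%VS -> a \in W -> b \in W ->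
  (Rad s W <= X :&: orthov s <[a]> :&: orthov s <[b]>)%VS.
Proof.
move=> RX aW bW; apply/subvP => x xR.
have xX := subvP RX _ xR.
move: xR; rewrite memRad => /andP [_ /mem_orthovP xo].
by rewrite !memv_cap xX !mem_orthov_line (xo a aW) (xo b bW) eqxx.
Qed.

Lemma W3 (W : {vspace vT}) x y r : (W <= H)%VS -> (\dim W <= 3)%N -> (5 <= n)%N ->
  x \in W -> y \in W -> s x y != 0 -> r \in W -> r \in orthov s W -> s r e != 0 ->
  is_obj W /\ \dim W = 3%N.
Proof.
move=> WH dW n5 xW yW xy rW ro re.
apply: (@obj_odd W (W :&: orthov s <[x]> :&: orthov s <[y]>)%VS 1 r) => //.
- by rewrite leq_subRL // (leq_trans _ n5).
- by apply: Rad_le => //; exact: Rad_sub.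
- by rewrite addn2 (DL salt xW yW xy).
- exact: Rad_mem.
Qed.

Lemma W5 (W : {vspace vT}) x1 y1 x2 y2 r : (W <= H)%VS -> (\dim W <= 5)%N -> (7 <= n)%N ->
  x1 \in W -> y1 \in W -> s x1 y1 != 0 ->
  x2 \in (W :&: orthov s <[x1]> :&: orthov s <[y1]>)%VS ->
  y2 \in (W :&: orthov s <[x1]> :&: orthov s <[y1]>)%VS -> s x2 y2 != 0 ->
  r \in W -> r \in orthov s W -> s r e != 0 ->
  is_obj W /\ \dim W = 5%N.
Proof.
move=> WH dW n7 x1W y1W xy1 x2W y2W xy2 rW ro re.
set W1 := (W :&: orthov s <[x1]> :&: orthov s <[y1]>)%VS in x2W y2W.
apply: (@obj_odd W (W1 :&: orthov s <[x2]> :&: orthov s <[y2]>)%VS 2 r) => //.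
- by rewrite leq_subRL // (leq_trans _ n7).
- apply: Rad_le; last 2 first.
  + by apply: (subvP _ _ x2W); rewrite /W1 -capvA capvSl.
  + by apply: (subvP _ _ y2W); rewrite /W1 -capvA capvSl.
  by apply: Rad_le => //; exact: Rad_sub.
- have e1 := DL salt x1W y1W xy1; have e2 := DL salt x2W y2W xy2.
  by rewrite -e1 -/W1 -e2 /= !addnS addn0.
- exact: Rad_mem.
Qed.

Lemma mem_line3a (a b v : vT) : a \in (<[a]> + <[b]> + <[v]>)%VS.
Proof. by apply: (subvP (addvSl _ _)); apply: (subvP (addvSl _ _)); exact: memv_line. Qed.
Lemma mem_line3b (a b v : vT) : b \in (<[a]> + <[b]> + <[v]>)%VS.
Proof. by apply: (subvP (addvSl _ _)); apply: (subvP (addvSr _ _)); exact: memv_line. Qed.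
Lemma mem_line3c (a b v : vT) : v \in (<[a]> + <[b]> + <[v]>)%VS.
Proof. by apply: (subvP (addvSr _ _)); exact: memv_line. Qed.

Lemma orthov_line3 (a b v x : vT) :
  (x \in orthov s (<[a]> + <[b]> + <[v]>)%VS) = [&& s x a == 0, s x b == 0 & s x v == 0].
Proof. by rewrite !mem_orthovD !mem_orthov_line andbA. Qed.

Lemma line3_H (a b v : vT) : a \in H -> b \in H -> v \in H -> (<[a]> + <[b]> + <[v]> <= H)%VS.
Proof. by move=> aH bH vH; rewrite !subv_add -!memvE aH bH vH. Qed.

Lemma dim_line3 (a b v : vT) : (\dim (<[a]> + <[b]> + <[v]>)%VS <= 3)%N.
Proof.
apply: leq_trans (dim_add_le _ _) _; rewrite dim_vline.
apply: (@leq_trans (2 + 1)%N); last by [].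
apply: leq_add; last by case: (v != 0).
apply: leq_trans (dim_add_le _ _) _; rewrite !dim_vline.
by case: (a != 0); case: (b != 0).
Qed.

Lemma W3_B1 (a b h0 : vT) : a \in H -> b \in H -> s a b != 0 ->
  h0 \in H -> h0 \in orthov s H -> s h0 e != 0 -> (5 <= n)%N ->
  is_obj (<[a]> + <[b]> + <[h0]>)%VS /\ \dim (<[a]> + <[b]> + <[h0]>)%VS = 3%N.
Proof.
move=> aH bH ab hH ho he n5.
apply: (@W3 _ a b h0) => //.
- exact: line3_H.
- exact: dim_line3.
- exact: mem_line3a.
- exact: mem_line3b.
- exact: mem_line3c.
- exact: (subvP (orthovS s (line3_H aH bH hH)) _ ho).
Qed.

Lemma W3_B2 (a b v : vT) : a \in H -> b \in H -> s a b = 0 -> v \in H -> (5 <= n)%N ->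
  s v b * s a e - s v a * s b e != 0 ->
  is_obj (<[a]> + <[b]> + <[v]>)%VS /\ \dim (<[a]> + <[b]> + <[v]>)%VS = 3%N.
Proof.
move=> aH bH ab vH n5 D.
have ba : s b a = 0 by rewrite skew ab oppr0.
have WH := line3_H aH bH vH.
pose r := s v b *: a - s v a *: b.
have rW : r \in (<[a]> + <[b]> + <[v]>)%VS.
  by rewrite rpredB ?memvZ ?mem_line3a ?mem_line3b.
have ro : r \in orthov s (<[a]> + <[b]> + <[v]>)%VS.
  rewrite orthov_line3 /r !linearBl /= !linearZl_LR /= !salt ab ba.
  rewrite (skew s a v) (skew s b v).
  apply/and3P; split; apply/eqP; ring.
have re : s r e != 0 by rewrite /r linearBl /= !linearZl_LR.
case: (eqVneq (s v a) 0) => [va|va].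
  have vb : s v b != 0 by apply: contraNneq D => ->; rewrite va !mul0r subr0.
  apply: (@W3 _ b v r) => //; rewrite ?mem_line3b ?mem_line3c ?dim_line3 //.
  by rewrite skew oppr_eq0.
apply: (@W3 _ a v r) => //; rewrite ?mem_line3a ?mem_line3c ?dim_line3 //.
by rewrite skew oppr_eq0.
Qed.

Lemma mem_line2 (a b x : vT) : x \in (<[a]> + <[b]>)%VS ->
  exists c1 c2, x = c1 *: a + c2 *: b.
Proof.
case/memv_addP => y /vlineP [c1 ->] [z /vlineP [c2 ->] ->].
by exists c1, c2.
Qed.

Lemma mem_line2a (a b : vT) : a \in (<[a]> + <[b]>)%VS.
Proof. by apply: (subvP (addvSl _ _)); exact: memv_line. Qed.
Lemma mem_line2b (a b : vT) : b \in (<[a]> + <[b]>)%VS.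
Proof. by apply: (subvP (addvSr _ _)); exact: memv_line. Qed.

Lemma r_facts : vpick R \in R /\ vpick R != 0.
Proof. by split; [exact: memv_pick | rewrite vpick0 -dimv_eq0 dimR1]. Qed.

Lemma decompB u1 u2 u3 : u1 != 0 -> u2 \notin <[u1]>%VS -> u3 \notin (<[u1]> + <[u2]>)%VS ->
  ~~ (R <= <[u1]> + <[u2]>)%VS -> ~~ (R <= <[u2]> + <[u3]>)%VS ->
  ~~ (R <= <[u3]> + <[u1]>)%VS -> (R <= <[u1]> + <[u2]> + <[u3]>)%VS ->
  exists a b r, [/\ u3 = a *: u1 + b *: u2 + r, r \in R, a != 0 & b != 0].
Proof.
move=> u1ne u21 u3L RL1 RL2 RL3 RT.
have [rR r0] := r_facts; set r := vpick R in rR r0.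
have rL1 : r \notin (<[u1]> + <[u2]>)%VS by apply: contra RL1 => h; exact: R_in rR r0 h.
have dL1 : \dim (<[u1]> + <[u2]>)%VS = 2%N by rewrite dim_add_line // dim_vline u1ne.
have sub : (<[u1]> + <[u2]> + <[r]> <= <[u1]> + <[u2]> + <[u3]>)%VS.
  by rewrite subv_add addvSl -memvE (subvP RT).
have eqT : (<[u1]> + <[u2]> + <[r]>)%VS = (<[u1]> + <[u2]> + <[u3]>)%VS.
  apply/eqP; rewrite eqEdim sub /= !dim_add_line // ?dL1 //.
have : u3 \in (<[u1]> + <[u2]> + <[r]>)%VS by rewrite eqT; apply: (subvP (addvSr _ _)); exact: memv_line.
case/memv_addP => l /mem_line2 [a [b ->]] [w /vlineP [k ->] e3].
have kR : k *: r \in R by exact: memvZ.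
exists a, b, (k *: r); split => //.
  apply/eqP => a0; move: e3; rewrite a0 scale0r add0r => e3.
  have kr0 : k *: r = 0.
    apply: (R_notin RL2 kR).
    have -> : k *: r = u3 - b *: u2 by rewrite e3 addrC addKr.
    by rewrite rpredB ?memvZ ?mem_line2a ?mem_line2b.
  move: u3L; rewrite e3 kr0 addr0 => /negP; apply.
  by rewrite memvZ ?mem_line2b.
apply/eqP => b0; move: e3; rewrite b0 scale0r addr0 => e3.
have kr0 : k *: r = 0.
  apply: (R_notin RL3 kR).
  have -> : k *: r = u3 - a *: u1 by rewrite e3 addrC addKr.
  by rewrite rpredB ?memvZ ?mem_line2a ?mem_line2b.
move: u3L; rewrite e3 kr0 addr0 => /negP; apply.
by rewrite memvZ ?mem_line2a.
Qed.


Lemma adjust_v y h0 : y \in H -> h0 \in H -> h0 \in orthov s H -> s h0 e != 0 ->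
  exists v, [/\ v \in H, s v e != 0 & forall x, x \in H -> s v x = s y x].
Proof.
move=> yH hH ho he.
have h0x x : x \in H -> s h0 x = 0 by move=> xH; move/mem_orthovP: ho; apply.
case: (eqVneq (s y e) 0) => [ye|ye]; last by exists y.
exists (y + h0); split; first by rewrite rpredD.
  by rewrite linearDl /= ye add0r.
by move=> x xH; rewrite linearDl /= h0x // addr0.
Qed.

Lemma caseB u1 u2 u3 h0 : u1 \in H -> u2 \in H -> u3 \in H ->
  s u1 e != 0 -> s u2 e != 0 -> s u3 e != 0 ->
  u2 \notin <[u1]>%VS -> u3 \notin (<[u1]> + <[u2]>)%VS ->
  ~~ (R <= <[u1]> + <[u2]>)%VS -> ~~ (R <= <[u2]> + <[u3]>)%VS ->
  ~~ (R <= <[u3]> + <[u1]>)%VS -> (R <= <[u1]> + <[u2]> + <[u3]>)%VS ->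
  h0 \in H -> h0 \in orthov s H -> s h0 e != 0 -> (5 <= n)%N ->
  exists v, [/\ v \in H, s v e != 0,
     is_obj (<[u1]> + <[u2]> + <[v]>)%VS /\ \dim (<[u1]> + <[u2]> + <[v]>)%VS = 3%N,
     is_obj (<[u2]> + <[u3]> + <[v]>)%VS /\ \dim (<[u2]> + <[u3]> + <[v]>)%VS = 3%N &
     is_obj (<[u3]> + <[u1]> + <[v]>)%VS /\ \dim (<[u3]> + <[u1]> + <[v]>)%VS = 3%N].
Proof.
move=> u1H u2H u3H f1 f2 f3 u21 u3L RL1 RL2 RL3 RT hH ho he n5.
have u1ne := ne0_of_e f1.
have [a [b [r [e3 rR a0 b0]]]] := decompB u1ne u21 u3L RL1 RL2 RL3 RT.
have su3 x : s x u3 = a * s x u1 + b * s x u2.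
  by rewrite e3 !linearDr /= !linearZr_LR /= (R_orth' x rR) addr0.
have s3u x : s u3 x = a * s u1 x + b * s u2 x.
  by rewrite e3 !linearDl /= !linearZl_LR /= (R_orth x rR) addr0.
case: (eqVneq (s u1 u2) 0) => [u12|u12]; last first.
  have u21' : s u2 u1 != 0 by rewrite skew0.
  exists h0; split => //.
  - exact: W3_B1.
  - apply: W3_B1 => //; rewrite su3 salt mulr0 addr0 mulf_neq0 //.
  - apply: W3_B1 => //; rewrite s3u salt mulr0 add0r mulf_neq0 //.
have u21z : s u2 u1 = 0 by rewrite skew u12 oppr0.
pose k := s u2 e *: u1 - s u1 e *: u2.
have kL1 : k \in (<[u1]> + <[u2]>)%VS by rewrite rpredB ?memvZ ?mem_line2a ?mem_line2b.
have ke : s k e = 0 by rewrite /k linearBl /= !linearZl_LR /= mulrC subrr.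
have k0 : k != 0.
  apply/eqP => /eqP; rewrite /k subr_eq0 => /eqP h.
  move: u21; rewrite (_ : u2 = (s u2 e / s u1 e) *: u1) ?memvZ ?memv_line //.
  apply: (scalerI f1); rewrite scalerA.
  have -> : s u1 e * (s u2 e / s u1 e) = s u2 e by field.
  by rewrite h.
have kR : k \notin (<<[:: h0]>> + R)%VS.
  rewrite span_seq1; apply/negP => /memv_addP [x /vlineP [c ->] [rho rhoR ek]].
  have : s k e = c * s h0 e by rewrite ek linearDl /= linearZl_LR /= (R_orth e rhoR) addr0.
  rewrite ke => /esym/eqP; rewrite mulf_eq0 (negPf he) orbF => /eqP c0.
  move: ek; rewrite c0 scale0r add0r => ek.
  have kR' : k \in R by rewrite ek.
  by rewrite (R_in kR' k0 kL1) in RL1.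
have : k \notin orthov s (orthov s <<[:: h0]>>) by apply: contra kR; exact: E_lemma.
case/mem_orthovPn => y; rewrite span_seq1 => yo ky.
have yH : y \in H by rewrite (H_orth hH ho he).
have [v [vH ve vx]] := adjust_v yH hH ho he.
have D1e : s v u2 * s u1 e - s v u1 * s u2 e = s k y.
  rewrite /k linearBl /= !linearZl_LR /= (skew s u1 y) (skew s u2 y) -!vx //; ring.
have u23 : s u2 u3 = 0 by rewrite su3 salt u21z !mulr0 addr0.
have u31 : s u3 u1 = 0 by rewrite s3u salt u21z !mulr0 addr0.
exists v; split => //.
- by apply: W3_B2 => //; rewrite D1e.
- apply: W3_B2 => //.
  have -> : s v u3 * s u2 e - s v u2 * s u3 e = - a * (s v u2 * s u1 e - s v u1 * s u2 e).
    by rewrite su3 s3u; ring.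
  by rewrite mulf_neq0 ?oppr_eq0 // D1e.
- apply: W3_B2 => //.
  have -> : s v u1 * s u3 e - s v u3 * s u1 e = - b * (s v u2 * s u1 e - s v u1 * s u2 e).
    by rewrite su3 s3u; ring.
  by rewrite mulf_neq0 ?oppr_eq0 // D1e.
Qed.


Lemma indep3 (u1 u2 u3 : vT) (c1 c2 c3 : F) : u1 != 0 -> u2 \notin <[u1]>%VS ->
  u3 \notin (<[u1]> + <[u2]>)%VS -> c1 *: u1 + c2 *: u2 + c3 *: u3 = 0 ->
  [/\ c1 = 0, c2 = 0 & c3 = 0].
Proof.
move=> u10 u21 u3L h.
have c30 : c3 = 0.
  apply/eqP; apply: contraNT u3L => c3n.
  move/eqP: h; rewrite addrC addr_eq0 => /eqP e3.
  have -> : u3 = c3^-1 *: (c3 *: u3) by rewrite scalerA mulVf // scale1r.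
  by rewrite e3 memvZ // rpredN rpredD // memvZ // ?mem_line2a ?mem_line2b.
move: h; rewrite c30 scale0r addr0 => h.
have c20 : c2 = 0.
  apply/eqP; apply: contraNT u21 => c2n.
  move/eqP: h; rewrite addrC addr_eq0 => /eqP e2.
  have -> : u2 = c2^-1 *: (c2 *: u2) by rewrite scalerA mulVf // scale1r.
  by rewrite e2 memvZ // rpredN memvZ // memv_line.
move: h; rewrite c20 scale0r addr0 => /eqP; rewrite scaler_eq0 (negPf u10) orbF => /eqP.
by [].
Qed.

Lemma notin_span t w h0 (T : {vspace vT}) : t \in T -> w \in T -> s t e = 0 -> s w e = 0 ->
  ~~ (R <= T)%VS -> s h0 e != 0 -> (forall c, t - c *: w != 0) ->
  t \notin (<<[:: w; h0]>> + R)%VS.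
Proof.
move=> tT wT te we RT he nz.
rewrite span_cons span_seq1; apply/negP.
case/memv_addP => x xs [rho rhoR et].
case/memv_addP: xs => x1 /vlineP [c e1] [x2 /vlineP [d e2] ex].
rewrite ex e1 e2 in et.
have : s t e = d * s h0 e.
  by rewrite et !linearDl /= !linearZl_LR /= we (R_orth e rhoR) mulr0 add0r addr0.
rewrite te => /esym/eqP; rewrite mulf_eq0 (negPf he) orbF => /eqP d0.
move: et; rewrite d0 scale0r addr0 => et.
have rE : rho = t - c *: w by rewrite et addrC addKr.
have rT : rho \in T by rewrite rE rpredB ?memvZ.
have := R_notin RT rhoR rT.
by rewrite rE => /eqP; rewrite (negPf (nz c)).
Qed.


Lemma get_y t w h0 (T : {vspace vT}) : t \in T -> w \in T -> s t e = 0 -> s w e = 0 ->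
  ~~ (R <= T)%VS -> h0 \in H -> h0 \in orthov s H -> s h0 e != 0 ->
  (forall c, t - c *: w != 0) ->
  exists y, [/\ y \in H, s y w = 0 & s t y != 0].
Proof.
move=> tT wT te we RT hH ho he nz.
have := notin_span tT wT te we RT he nz.
move=> h; have : t \notin orthov s (orthov s <<[:: w; h0]>>) by apply: contra h; exact: E_lemma.
case/mem_orthovPn => y; rewrite span_cons span_seq1 mem_orthovD !mem_orthov_line.
case/andP => /eqP yw yh ty; exists y; split => //.
by rewrite (H_orth hH ho he) mem_orthov_line yh.
Qed.

Lemma k_notin (u1 u2 u3 : vT) : s u1 e != 0 -> u3 \notin (<[u1]> + <[u2]>)%VS ->
  s u3 e *: u1 - s u1 e *: u3 \notin (<[u1]> + <[u2]>)%VS.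
Proof.
move=> f1 u3L; apply: contra u3L => kL.
have -> : u3 = (s u1 e)^-1 *: (s u3 e *: u1 - (s u3 e *: u1 - s u1 e *: u3)).
  by rewrite opprB addrC subrK scalerA mulVf // scale1r.
by rewrite memvZ // rpredB // memvZ // mem_line2a.
Qed.

Lemma k_neq0 (u1 u2 : vT) : s u1 e != 0 -> u2 \notin <[u1]>%VS ->
  s u2 e *: u1 - s u1 e *: u2 != 0.
Proof.
move=> f1 u21; apply/eqP => /eqP; rewrite subr_eq0 => /eqP h.
move: u21; rewrite (_ : u2 = (s u2 e / s u1 e) *: u1) ?memvZ ?memv_line //.
apply: (scalerI f1); rewrite scalerA.
have -> : s u1 e * (s u2 e / s u1 e) = s u2 e by field.
by rewrite h.
Qed.

Lemma caseA_ii u1 u2 u3 h0 : u1 \in H -> u2 \in H -> u3 \in H ->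
  s u1 e != 0 -> s u2 e != 0 -> s u3 e != 0 ->
  u2 \notin <[u1]>%VS -> u3 \notin (<[u1]> + <[u2]>)%VS ->
  ~~ (R <= <[u1]> + <[u2]> + <[u3]>)%VS ->
  (<[u1]> + <[u2]> + <[u3]> <= orthov s (<[u1]> + <[u2]> + <[u3]>))%VS ->
  h0 \in H -> h0 \in orthov s H -> s h0 e != 0 -> (7 <= n)%N ->
  exists W, [/\ is_obj W, \dim W = 5%N & (<[u1]> + <[u2]> + <[u3]> <= W)%VS].
Proof.
move=> u1H u2H u3H f1 f2 f3 u21 u3L RT TT hH ho he n7.
set T := (<[u1]> + <[u2]> + <[u3]>)%VS in RT TT *.
have iso a b : a \in T -> b \in T -> s a b = 0.
  by move=> aT bT; move/mem_orthovP: (subvP TT a aT); apply.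
have u1T : u1 \in T := mem_line3a _ _ _.
have u2T : u2 \in T := mem_line3b _ _ _.
have u3T : u3 \in T := mem_line3c _ _ _.
pose k1 := s u2 e *: u1 - s u1 e *: u2.
pose k2 := s u3 e *: u1 - s u1 e *: u3.
have k1T : k1 \in T by rewrite rpredB ?memvZ.
have k2T : k2 \in T by rewrite rpredB ?memvZ.
have k1e : s k1 e = 0 by rewrite /k1 linearBl /= !linearZl_LR /= mulrC subrr.
have k2e : s k2 e = 0 by rewrite /k2 linearBl /= !linearZl_LR /= mulrC subrr.
have k1L : k1 \in (<[u1]> + <[u2]>)%VS by rewrite rpredB ?memvZ ?mem_line2a ?mem_line2b.
have k2L : k2 \notin (<[u1]> + <[u2]>)%VS := k_notin f1 u3L.
have k10 : k1 != 0 by exact: k_neq0.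
have k20 : k2 != 0 by apply: contraNneq k2L => ->; rewrite mem0v.
have nz1 c : k1 - c *: k2 != 0.
  apply/eqP => /eqP; rewrite subr_eq0 => /eqP h.
  case: (eqVneq c 0) => [c0|c0]; first by move: k10; rewrite h c0 scale0r eqxx.
  move: k2L; rewrite (_ : k2 = c^-1 *: k1) ?memvZ //.
  by rewrite h scalerA mulVf // scale1r.
have nz2 c : k2 - c *: k1 != 0.
  apply/eqP => /eqP; rewrite subr_eq0 => /eqP h.
  by move: k2L; rewrite h memvZ.
have [y [yH yk2 k1y]] := get_y k1T k2T k1e k2e RT hH ho he nz1.
have [z [zH zk1 k2z]] := get_y k2T k1T k2e k1e RT hH ho he nz2.
pose W := (T + <[y]> + <[z]>)%VS.
have TW : (T <= W)%VS by rewrite /W -addvA addvSl.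
have yW : y \in W by apply: (subvP (addvSl _ _)); apply: (subvP (addvSr _ _)); exact: memv_line.
have zW : z \in W by apply: (subvP (addvSr _ _)); exact: memv_line.
have WH : (W <= H)%VS.
  by rewrite /W !subv_add -!memvE yH zH u1H u2H u3H.
have dW : (\dim W <= 5)%N.
  apply: leq_trans (dim_add_le _ _) _; rewrite dim_vline.
  apply: (@leq_trans (4 + 1)%N); last by [].
  apply: leq_add; last by case: (z != 0).
  apply: leq_trans (dim_add_le _ _) _; rewrite dim_vline.
  apply: (@leq_trans (3 + 1)%N); last by [].
  by apply: leq_add; [exact: dim_line3 | case: (y != 0)].
pose g := - s z y / s k1 y.
pose z' := z + g *: k1.
pose al := - s u1 y / s k1 y.
pose be := - s u1 z / s k2 z.
pose r := u1 + al *: k1 + be *: k2.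
have k2y : s k2 y = 0 by rewrite skew yk2 oppr0.
have k1z : s k1 z = 0 by rewrite skew zk1 oppr0.
have k1W : k1 \in W := subvP TW _ k1T.
have k2W1 : k2 \in (W :&: orthov s <[k1]> :&: orthov s <[y]>)%VS.
  by rewrite !memv_cap (subvP TW _ k2T) !mem_orthov_line (iso k2 k1) // k2y eqxx.
have z'W1 : z' \in (W :&: orthov s <[k1]> :&: orthov s <[y]>)%VS.
  rewrite !memv_cap rpredD ?memvZ //= !mem_orthov_line.
  rewrite /z' !linearDl /= !linearZl_LR /= zk1 salt mulr0 addr0 eqxx /=.
  by apply/eqP; rewrite /g; fld.
have k2z' : s k2 z' != 0.
  by rewrite /z' linearDr /= linearZr_LR /= (iso k2 k1) // mulr0 addr0.
have rT : r \in T by rewrite rpredD ?memvZ // rpredD // memvZ.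
have rW : r \in W := subvP TW _ rT.
have ro : r \in orthov s W.
  rewrite /W !mem_orthovD !mem_orthov_line.
  rewrite (iso r u1) ?(iso r u2) ?(iso r u3) // eqxx /= /r !linearDl /= !linearZl_LR /= k2y k1z.
  by apply/andP; split; apply/eqP; rewrite /al /be; fld.
have re : s r e != 0.
  by rewrite /r !linearDl /= !linearZl_LR /= k1e k2e !mulr0 !addr0.
have [oW dW5] := W5 WH dW n7 k1W yW k1y k2W1 z'W1 k2z' rW ro re.
by exists W.
Qed.

Lemma caseA_iii u1 u2 u3 h0 w : u1 \in H -> u2 \in H -> u3 \in H ->
  ~~ (R <= <[u1]> + <[u2]> + <[u3]>)%VS ->
  u1 \notin orthov s (<[u1]> + <[u2]> + <[u3]>)%VS ->
  w \in (<[u1]> + <[u2]> + <[u3]>)%VS -> w \in orthov s (<[u1]> + <[u2]> + <[u3]>)%VS ->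
  w != 0 -> s w e = 0 ->
  h0 \in H -> h0 \in orthov s H -> s h0 e != 0 -> (7 <= n)%N ->
  exists W, [/\ is_obj W, \dim W = 5%N & (<[u1]> + <[u2]> + <[u3]> <= W)%VS].
Proof.
move=> u1H u2H u3H RT u1o wT wo w0 we hH ho he n7.
set T := (<[u1]> + <[u2]> + <[u3]>)%VS in RT u1o wT wo *.
have wt x : x \in T -> s w x = 0 by move=> xT; move/mem_orthovP: wo; apply.
have tw x : x \in T -> s x w = 0 by move=> xT; rewrite skew wt // oppr0.
have u1T : u1 \in T := mem_line3a _ _ _.
have nz c : w - c *: 0 != 0 by rewrite scaler0 subr0.
have [y [yH _ wy]] := get_y wT (mem0v T) we (linear0l _ _) RT hH ho he nz.
case/mem_orthovPn: u1o => b0 b0T u1b0.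
pose W := (T + <[y]> + <[h0]>)%VS.
have TW : (T <= W)%VS by rewrite /W -addvA addvSl.
have yW : y \in W by apply: (subvP (addvSl _ _)); apply: (subvP (addvSr _ _)); exact: memv_line.
have hW : h0 \in W by apply: (subvP (addvSr _ _)); exact: memv_line.
have WH : (W <= H)%VS.
  by rewrite /W !subv_add -!memvE yH hH u1H u2H u3H.
have dW : (\dim W <= 5)%N.
  apply: leq_trans (dim_add_le _ _) _; rewrite dim_vline.
  apply: (@leq_trans (4 + 1)%N); last by [].
  apply: leq_add; last by case: (h0 != 0).
  apply: leq_trans (dim_add_le _ _) _; rewrite dim_vline.
  apply: (@leq_trans (3 + 1)%N); last by [].
  by apply: leq_add; [exact: dim_line3 | case: (y != 0)].
pose al := - s u1 y / s w y.
pose be := - s b0 y / s w y.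
pose x2 := u1 + al *: w.
pose y2 := b0 + be *: w.
have wW : w \in W := subvP TW _ wT.
have x2W1 : x2 \in (W :&: orthov s <[w]> :&: orthov s <[y]>)%VS.
  rewrite !memv_cap rpredD ?memvZ ?(subvP TW) //= !mem_orthov_line.
  rewrite /x2 !linearDl /= !linearZl_LR /= tw // salt mulr0 addr0 eqxx /=.
  by apply/eqP; rewrite /al; fld.
have y2W1 : y2 \in (W :&: orthov s <[w]> :&: orthov s <[y]>)%VS.
  rewrite !memv_cap rpredD ?memvZ ?(subvP TW) //= !mem_orthov_line.
  rewrite /y2 !linearDl /= !linearZl_LR /= tw // salt mulr0 addr0 eqxx /=.
  by apply/eqP; rewrite /be; fld.
have x2y2 : s x2 y2 != 0.
  rewrite /x2 /y2 !linearDl /= !linearDr /= !linearZl_LR /= !linearZr_LR /=.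
  by rewrite tw // wt // salt !mulr0 !addr0.
have ro : h0 \in orthov s W := subvP (orthovS s WH) _ ho.
have [oW dW5] := W5 WH dW n7 wW yW wy x2W1 y2W1 x2y2 hW ro he.
by exists W.
Qed.

Lemma caseA_5 (T : {vspace vT}) h0 : (T <= H)%VS -> \dim T = 3%N -> ~~ (R <= T)%VS ->
  ~~ is_obj T -> h0 \in H -> h0 \in orthov s H -> s h0 e != 0 -> n = 5%N -> False.
Proof.
move=> TH dT RT nobj hH ho he n5.
pose Z := (R + <[h0]>)%VS.
have h0R : h0 \notin R by apply: contra he => hR; rewrite R_orth.
have dZ : \dim Z = 2%N by rewrite /Z dim_add_line // dimR1.
have ZH : (Z <= H)%VS by rewrite /Z subv_add RsubH -memvE hH.
have Zo : (Z <= orthov s H)%VS by rewrite /Z subv_add R_sub_orth -memvE ho.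
have dH : \dim H = 4%N by move: dimH; rewrite n5 => -[].
have cap := dimv_sum_cap T Z.
have le4 : (\dim (T + Z) <= 4)%N by rewrite -dH dimvS // subv_add TH ZH.
have cap1 : (0 < \dim (T :&: Z))%N.
  rewrite lt0n; apply/negP => /eqP c0; move: cap; rewrite c0 addn0 dT dZ => e5.
  by rewrite e5 in le4.
have hne : vpick (T :&: Z) != 0 by rewrite vpick0 -dimv_eq0 -lt0n.
have /memv_capP [hT hZ] := memv_pick (T :&: Z).
set h := vpick (T :&: Z) in hne hT hZ.
have ho' : h \in orthov s H := subvP Zo _ hZ.
have hRe : s h e != 0.
  apply/eqP => he0; have hR := RHker (subvP ZH _ hZ) ho' he0.
  by rewrite (R_in hR hne hT) in RT.
have hRad : h \in Rad s T by rewrite memRad hT (subvP (orthovS s TH) _ ho').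
have dRad : ~~ (\dim (Rad s T) <= 2)%N.
  apply: contra nobj => dR; apply/and5P; split => //.
  - by rewrite dT.
  - by rewrite dT n5.
  - by rewrite dR (rad_cond hRad hRe).
have TT : (T <= orthov s T)%VS.
  have : Rad s T == T by rewrite eqEdim Rad_sub dT /= ltnNge.
  by rewrite /Rad /perp => /eqP /capv_idPl.
have cap2 : (\dim (T :&: Z) <= 1)%N.
  rewrite leqNgt; apply/negP => c2.
  have : (T :&: Z)%VS == Z by rewrite eqEdim capvSr dZ.
  move=> /eqP /capv_idPr ZT; move: RT; rewrite (subv_trans (addvSl _ _) ZT) //.
have TZ : (T + Z)%VS = H.
  apply/eqP; rewrite eqEdim subv_add TH ZH /= dH.
  move: cap cap2; rewrite dT dZ => c5 c1.
  rewrite -(leq_add2r (\dim (T :&: Z))) c5.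
  by apply: (@leq_trans (4 + 1)); [ | rewrite leq_add2l].
have Hiso : (H <= orthov s H)%VS.
  apply/subvP => x; rewrite -{1}TZ => /memv_addP [a aT [b bZ ->]].
  apply/mem_orthovP => y; rewrite -TZ => /memv_addP [c cT [d dZ' ->]].
  have bo : b \in orthov s H := subvP Zo _ bZ.
  have do' : d \in orthov s H := subvP Zo _ dZ'.
  move/mem_orthovP: bo => bo; move/mem_orthovP: do' => do'.
  move/mem_orthovP: (subvP TT _ aT) => ao.
  rewrite !linearDl /= !linearDr /= ao // bo ?(subvP TH) ?(subvP ZH) //.
  by rewrite (bo d) ?(subvP ZH) // (skew s a d) do' ?(subvP TH) // oppr0 !addr0.
have sub : (H :&: orthov s <[e]> <= R)%VS.
  apply/subvP => x /memv_capP [xH]; rewrite mem_orthov_line => /eqP xe.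
  exact: RHker xH (subvP Hiso _ xH) xe.
have := leq_dim_orthov1 s e H; rewrite dH => h3.
by have := leq_trans h3 (dimvS sub); rewrite dimR1.
Qed.

Lemma pt_obj u : is_obj <[u]>%VS -> u \in H /\ s u e != 0.
Proof.
case/and5P => uH d1 _ _ /andP [_ /orP rc]; split; first by rewrite memvE.
have u0 : u != 0 by apply: contraTneq d1 => ->; rewrite dim_vline eqxx.
have Ru : Rad s <[u]>%VS = <[u]>%VS.
  by apply/capv_idPl; rewrite -memvE mem_orthov_line salt.
case: rc; rewrite Ru.
  by rewrite -dimv_eq0 dim_vline u0.
by rewrite -memvE mem_perp.
Qed.

Lemma n5_of_line (L : {vspace vT}) : is_obj L -> \dim L = 2%N -> (5 <= n)%N.
Proof.
case/and5P => _ _ dn _ _ dL; rewrite dL in dn.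
have n2 : (2 <= n)%N.
  by rewrite leqNgt; apply/negP => h; move: dn; rewrite (eqP (_ : (n - 2 == 0)%N)) // subn_eq0 ltnW.
have n4 : (4 <= n)%N by move: dn; rewrite leq_subRL.
rewrite leq_eqVlt in n4; case/orP: n4 => [/eqP n4|//].
by move: nodd; rewrite -n4.
Qed.

Lemma dim_line2 (a b : vT) : a != 0 -> b \notin <[a]>%VS -> \dim (<[a]> + <[b]>)%VS = 2%N.
Proof. by move=> a0 ba; rewrite dim_add_line // dim_vline a0. Qed.

Lemma line_notin (a b : vT) : a != 0 -> b \notin <[a]>%VS -> a \notin <[b]>%VS.
Proof.
move=> a0 ba; apply/negP => /vlineP [c ec].
have c0 : c != 0 by apply: contraNneq a0 => c0; rewrite ec c0 scale0r.
by move: ba; rewrite ec => /negP; apply; apply/vlineP; exists c^-1; rewrite scalerA mulVf // scale1r.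
Qed.

Lemma tri_generic u1 u2 u3 h0 :
  path adj <[u1]>%VS [:: (<[u1]> + <[u2]>)%VS; <[u2]>%VS; (<[u2]> + <[u3]>)%VS;
     <[u3]>%VS; (<[u3]> + <[u1]>)%VS; <[u1]>%VS] ->
  u2 \notin <[u1]>%VS -> u3 \notin (<[u1]> + <[u2]>)%VS ->
  h0 \in H -> h0 \in orthov s H -> s h0 e != 0 ->
  hrel [:: <[u1]>%VS; (<[u1]> + <[u2]>)%VS; <[u2]>%VS; (<[u2]> + <[u3]>)%VS;
     <[u3]>%VS; (<[u3]> + <[u1]>)%VS; <[u1]>%VS] [:: <[u1]>%VS].
Proof.
move=> hp u21 u3L hH ho he.
move: (hp) => /= /andP [a1 /andP [a2 /andP [a3 /andP [a4 /andP [a5 /andP [a6 _]]]]]].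
have [o1 oL1] := adj_obj a1; have [o2 oL2] := adj_obj a3; have [o3 oL3] := adj_obj a5.
have [u1H f1] := pt_obj o1; have [u2H f2] := pt_obj o2; have [u3H f3] := pt_obj o3.
have u10 := ne0_of_e f1; have u20 := ne0_of_e f2; have u30 := ne0_of_e f3.
have u32 : u3 \notin <[u2]>%VS.
  by apply: contra u3L => h; apply: (subvP (addvSr _ _)).
have u13 : u1 \notin <[u3]>%VS.
  apply: line_notin => //; apply: contra u3L => h; exact: (subvP (addvSl _ _)).
have e1 := dim_line2 u10 u21; have e2 := dim_line2 u20 u32; have e3 := dim_line2 u30 u13.
have n5 := n5_of_line oL1 e1.
have RL x : is_obj x -> ~~ (R <= x)%VS by case/and5P.
set T := (<[u1]> + <[u2]> + <[u3]>)%VS.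
have dT : \dim T = 3%N by rewrite /T dim_add_line // e1.
have TH : (T <= H)%VS by rewrite /T !subv_add -!memvE u1H u2H u3H.
have s1 : ((<[u1]> + <[u2]>) <= T)%VS by exact: addvSl.
have s2 : ((<[u2]> + <[u3]>) <= T)%VS.
  by rewrite subv_add -!memvE mem_line3b mem_line3c.
have s3 : ((<[u3]> + <[u1]>) <= T)%VS.
  by rewrite subv_add -!memvE mem_line3c mem_line3a.
have d1 (u : vT) : u != 0 -> \dim <[u]>%VS = 1%N by move=> h; rewrite dim_vline h.
case: (boolP (R <= T)%VS) => RT.
  have [v [vH ve [oW1 dW1] [oW2 dW2] [oW3 dW3]]] :=
    caseB u1H u2H u3H f1 f2 f3 u21 u3L (RL _ oL1) (RL _ oL2) (RL _ oL3) RT hH ho he n5.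
  apply: (conept_hex (v:=v)) => //; rewrite ?mem_line2a ?mem_line2b //.
case: (boolP (is_obj T)) => oT.
  apply: (cone_hex (W:=T)) => //; rewrite ?d1 ?dT //.
have [n5e|n7] : n = 5%N \/ (7 <= n)%N.
  case: (eqVneq n 5) => [->|ne]; [by left|right].
  have h6 : (6 <= n)%N by rewrite ltn_neqAle eq_sym ne n5.
  case: (eqVneq n 6) => [e6|ne6]; first by move: nodd; rewrite e6.
  by rewrite ltn_neqAle eq_sym ne6 h6.
  by exfalso; exact: (caseA_5 TH dT RT oT hH ho he n5e).
have [W [oW dW TW]] : exists W, [/\ is_obj W, \dim W = 5%N & (T <= W)%VS].
  case: (boolP (\dim (Rad s T) <= 2)%N) => dR.
    have rc : ~~ ((Rad s T == 0%VS) || ~~ (Rad s T <= perp s p)%VS).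
      apply: contra oT => rc; apply/and5P; split => //.
      - by rewrite dT.
      - by rewrite dT leq_subRL // (leq_trans _ n7).
      - by rewrite dR rc.
    rewrite negb_or negbK in rc; case/andP: rc => R0 Rp.
    have w0 : vpick (Rad s T) != 0 by rewrite vpick0.
    have := memv_pick (Rad s T); rewrite memRad => /andP [wT wo].
    have we : s (vpick (Rad s T)) e = 0.
      by apply/eqP; rewrite -mem_perp; apply: (subvP Rp); exact: memv_pick.
    have u1o : u1 \notin orthov s T.
      apply/negP => u1o; have : u1 \in Rad s T by rewrite memRad mem_line3a.
      by move/(subvP Rp); rewrite mem_perp (negPf f1).
    exact: (caseA_iii u1H u2H u3H RT u1o wT wo w0 we hH ho he n7).
  have TT : (T <= orthov s T)%VS.
    have : Rad s T == T by rewrite eqEdim Rad_sub dT /= ltnNge.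
    by rewrite /Rad /perp => /eqP /capv_idPl.
  exact: (caseA_ii u1H u2H u3H f1 f2 f3 u21 u3L RT TT hH ho he n7).
apply: (@cone_hex _ _ _ _ _ _ W) => //; rewrite ?d1 ?dW //.
- exact: subv_trans s1 TW.
- exact: subv_trans s2 TW.
- exact: subv_trans s3 TW.
Qed.

Lemma line_eq (P Q L L' : {vspace vT}) : P != Q -> \dim P = 1%N -> \dim Q = 1%N ->
  (P <= L)%VS -> (Q <= L)%VS -> (P <= L')%VS -> (Q <= L')%VS ->
  \dim L = 2%N -> \dim L' = 2%N -> L = L'.
Proof.
move=> PQ dP dQ PL QL PL' QL' dL dL'.
have dc : \dim (P :&: Q) = 0%N.
  apply/eqP; rewrite dimv_eq0; apply: contraNT PQ => nz.
  have dc1 : \dim (P :&: Q) = 1%N.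
    apply/eqP; rewrite eqn_leq -{1}dP dimvS ?capvSl //= lt0n dimv_eq0 nz.
    by [].
  have eP : (P :&: Q)%VS = P by apply/eqP; rewrite eqEdim capvSl dc1 dP.
  have eQ : (P :&: Q)%VS = Q by apply/eqP; rewrite eqEdim capvSr dc1 dQ.
  by rewrite -eP eQ.
have dPQ : \dim (P + Q)%VS = 2%N.
  by have := dimv_sum_cap P Q; rewrite dc dP dQ addn0.
have e1 : (P + Q)%VS = L by apply/eqP; rewrite eqEdim subv_add PL QL dL dPQ.
have e2 : (P + Q)%VS = L' by apply/eqP; rewrite eqEdim subv_add PL' QL' dL' dPQ.
by rewrite -e1 -e2.
Qed.

Lemma line_pick (P : {vspace vT}) : \dim P = 1%N -> P = <[vpick P]>%VS.
Proof.
move=> dP; have P0 : vpick P != 0 by rewrite vpick0 -dimv_eq0 dP.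
by apply/eqP; rewrite eq_sym eqEdim -memvE memv_pick dim_vline P0 dP.
Qed.

Lemma four_cycle x y z : adj x y -> adj y z -> hrel [:: x; y; z; y; x] [:: x].
Proof.
move=> hxy hyz.
apply: (@rt_trans _ _ _ [:: x; y; x]); first exact: (hrel_cons x (back [:: x] hyz)).
exact: (back [::] hxy).
Qed.

Lemma main_geo x c : is_triangle s p H x c -> null_homotopic s p H x c.
Proof.
case=> P1 [P2 [P3 [L1 [L2 [L3 [-> -> hp [d1 d2 d3] [e1 e2 e3]]]]]]].
rewrite /null_homotopic.
have [h0 [hH ho he]] := h0_exists.
move: (hp) => /= /andP [a1 /andP [a2 /andP [a3 /andP [a4 /andP [a5 /andP [a6 _]]]]]].
have lt12 : forall X Y : {vspace vT}, \dim X = 1%N -> \dim Y = 2%N -> (\dim X < \dim Y)%N.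
  by move=> X Y -> ->.
have c11 : (P1 <= L1)%VS by have := adj_sub a1; apply; apply: lt12.
have a2' : adj P2 L1 by rewrite adj_sym.
have c21 : (P2 <= L1)%VS by have := adj_sub a2'; apply; apply: lt12.
have c22 : (P2 <= L2)%VS by have := adj_sub a3; apply; apply: lt12.
have a4' : adj P3 L2 by rewrite adj_sym.
have c32 : (P3 <= L2)%VS by have := adj_sub a4'; apply; apply: lt12.
have c33 : (P3 <= L3)%VS by have := adj_sub a5; apply; apply: lt12.
have a6' : adj P1 L3 by rewrite adj_sym.
have c13 : (P1 <= L3)%VS by have := adj_sub a6'; apply; apply: lt12.
case: (eqVneq P1 P2) => [E12|N12].
  subst P2.
  apply: (rt_trans _ _ _ _ _ (back [:: L2; P3; L3; P1] a1)).
  case: (eqVneq P3 P1) => [E31|N31].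
    subst P3.
    apply: (rt_trans _ _ _ _ _ (back [:: L3; P1] a3)).
    exact: (back [::] a5).
  have E : L3 = L2 by apply: (line_eq N31).
  subst L3; exact: four_cycle a3 a4.
case: (eqVneq P2 P3) => [E23|N23].
  subst P3.
  have := hrel_ctx [:: P1; L1] [::] (back [:: L3; P1] a3); rewrite /= => h.
  apply: (rt_trans _ _ _ _ _ h).
  have E : L3 = L1 by apply: (line_eq N12) => //; rewrite -?E23.
  subst L3; exact: four_cycle a1 a2.
case: (eqVneq P3 P1) => [E31|N31].
  subst P3.
  have := hrel_ctx [:: P1; L1; P2; L2] [::] (back [::] a5); rewrite /= => h.
  apply: (rt_trans _ _ _ _ _ h).
  have E : L2 = L1 by apply: (line_eq N12).
  subst L2; exact: four_cycle a1 a2.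
have pts_ne (P Q : {vspace vT}) : P != Q -> \dim P = 1%N -> \dim Q = 1%N ->
    vpick Q \notin P.
  move=> PQ dP dQ; apply: contra PQ => h; rewrite eq_sym eqEdim dP dQ /=.
  by rewrite {1}(line_pick dQ) -memvE h.
have E1 := line_pick d1; have E2 := line_pick d2; have E3 := line_pick d3.
set u1 := vpick P1 in E1; set u2 := vpick P2 in E2; set u3 := vpick P3 in E3.
have u10 : u1 != 0 by rewrite /u1 vpick0 -dimv_eq0 d1.
have u20 : u2 != 0 by rewrite /u2 vpick0 -dimv_eq0 d2.
have u30 : u3 != 0 by rewrite /u3 vpick0 -dimv_eq0 d3.
have u21 : u2 \notin <[u1]>%VS by rewrite -E1; apply: pts_ne => //.
have u32 : u3 \notin <[u2]>%VS by rewrite -E2; apply: pts_ne => //.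
have u13 : u1 \notin <[u3]>%VS by rewrite -E3; apply: pts_ne => //.
have EL1 : L1 = (<[u1]> + <[u2]>)%VS.
  apply: (line_eq N12) => //; rewrite ?E1 ?E2 ?addvSl ?addvSr //; exact: dim_line2.
have EL2 : L2 = (<[u2]> + <[u3]>)%VS.
  apply: (line_eq N23) => //; rewrite ?E2 ?E3 ?addvSl ?addvSr //; exact: dim_line2.
have EL3 : L3 = (<[u3]> + <[u1]>)%VS.
  apply: (line_eq N31) => //; rewrite ?E1 ?E3 ?addvSl ?addvSr //; exact: dim_line2.
case: (boolP (u3 \in (<[u1]> + <[u2]>)%VS)) => u3L.
  have c31 : (P3 <= L1)%VS by rewrite E3 EL1 -memvE.
  have E21 : L2 = L1 by apply: (line_eq N23).
  have E31 : L3 = L1 by apply: (line_eq N31).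
  rewrite E21 E31; rewrite E21 in a4.
  have h := hrel_ctx [:: P1] [::] (back [:: P3; L1; P1] a2); rewrite /= in h.
  apply: (rt_trans _ _ _ _ _ h); exact: four_cycle a1 a4.
rewrite EL1 EL2 EL3 E1 E2 E3 in hp *.
exact: tri_generic hp u21 u3L hH ho he.
Qed.

End Geo.

Unset Implicit Arguments.
Local Close Scope ring_scope.

Theorem lemma4p5 (F : fieldType) (vT : vectType F) (s : {skew_symmetric vT}%R)
  (p H : {vspace vT}) :
  (forall v : vT, s v v = 0%R) ->
  odd (\dim {:vT}) ->
  (\dim (Rad s fullv) <= 1)%N ->
  \dim p = 1%N ->
  (p :&: Rad s fullv = 0)%VS ->
  (p + H = fullv)%VS -> (p :&: H = 0)%VS ->
  (Rad s fullv <= H)%VS ->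
  forall (x : {vspace vT}) (c : seq {vspace vT}),
    is_triangle s p H x c -> null_homotopic s p H x c.
Proof.
move=> salt nodd dR dp _ pH pHc RH x c.
exact: (main_geo salt nodd dR dp pH pHc RH).
Qed.
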